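(* Let $M(A)$ be a $2n$-dimensional real Bott manifold with Kähler structure (RBK manifold), with Bott matrix $A=[a_{ij}]$ and $P$-matrix $P_A$, and fix a partition $\{1,\dots,2n\}=\coprod_{k=1}^n\{j_k,j_{k+n}\}$ with $A^{j_k}=A^{j_{k+n}}$ for all $k$. For $1\le i<j\le 2n$ put $b_{ji}=a_{ij}$, and put $b_{ji}=0$ if $i\ge j$. Then $$w_2(M(A))=\pi^*\Big(\sum_{i=1}^{2n}\big(b_{j_1i}+b_{j_2i}+\dots+b_{j_ni}\big)x_i^2\Big),$$ i.e. the second Stiefel–Whitney class is represented by the polynomial $\sum_{i}\big(b_{j_1i}+\dots+b_{j_ni}\big)x_i^2\in\mathbb F_2[x_1,\dots,x_{2n}]$. Moreover, $M(A)$ admits a Spin-structure if and only if for every $i$ either $b_{j_1i}+b_{j_2i}+\dots+b_{j_ni}\equiv 0 \pmod 2$ or $x_i^2\in \mathrm{Id}_{P_A}$.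
   Context: Real Bott manifolds: let $A=[a_{ij}]$ be an $m\times m$ strictly upper triangular matrix with entries in $\{0,1\}$. For $i=1,\dots,m-1$ let $s_i$ be the Euclidean motion of $\mathbb R^m$ given by $s_i=(\mathrm{diag}[1,\dots,1,(-1)^{a_{i,i+1}},\dots,(-1)^{a_{i,m}}],\ \tfrac12 e_i)$ (the entry $(-1)^{a_{i,i+1}}$ in position $(i+1,i+1)$, translation part having $\tfrac12$ in the $i$-th coordinate and $0$ elsewhere), and $s_m=(I,\tfrac12 e_m)$. The group $\Gamma(A)=\langle s_1,\dots,s_m\rangle$ is a torsion-free crystallographic group whose translation subgroup $\mathbb Z^m$ is generated by $s_1^2,\dots,s_m^2$; $M(A)=\mathbb R^m/\Gamma(A)$ is the real Bott manifold, and there is an extension $0\to\mathbb Z^m\to\Gamma(A)\xrightarrow{\pi}\mathbb Z_2^m\to 1$. Identify $H^*(\mathbb Z_2^m;\mathbb F_2)=\mathbb F_2[x_1,\dots,x_m]$, with $x_1,\dots,x_m$ the basis of $H^1$ dual to the images of $s_1,\dots,s_m$, and let $\pi^*:H^*(\mathbb Z_2^m;\mathbb F_2)\to H^*(\Gamma(A);\mathbb F_2)=H^*(M(A);\mathbb F_2)$. $P$-matrix: $P_A=[p_{ij}]$ is the $m\times m$ matrix with $p_{ii}=1$, $p_{ij}=2$ if $i<j$ and $a_{ij}=1$, and $p_{ij}=0$ otherwise. Define $\alpha,\beta:\{0,1,2,3\}\to\mathbb F_2$ by $\alpha(0)=0,\alpha(1)=1,\alpha(2)=1,\alpha(3)=0$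 and $\beta(0)=0,\beta(1)=1,\beta(2)=0,\beta(3)=1$. For $j=1,\dots,m$ set $\alpha_j=\sum_{i}\alpha(p_{ij})x_i$, $\beta_j=\sum_i\beta(p_{ij})x_i$, $\theta_j=\alpha_j\beta_j$; the characteristic ideal is $\mathrm{Id}_{P_A}=\langle\theta_1,\dots,\theta_m\rangle\subseteq\mathbb F_2[x_1,\dots,x_m]$. (Thus $\alpha_j+\beta_j=\sum_{i<j}a_{ij}x_i$.) The total Stiefel–Whitney class of $M(A)$ is $w(M(A))=\pi^*\big(\prod_{j=1}^m(1+\alpha_j+\beta_j)\big)$, and $\ker\pi^*$ in degree $2$ is $\mathrm{Id}_{P_A}$ in degree 2. RBK manifold: $m=2n$ and there exist $n$ disjoint subsets $\{j_1,j_{n+1}\},\dots,\{j_n,j_{2n}\}$ with $\coprod_{k=1}^n\{j_k,j_{k+n}\}=\{1,\dots,2n\}$ and $A^{j_k}=A^{j_{k+n}}$ for all $k$, where $A^j$ denotes the $j$-th column of $A$ (equivalently, by Ishida's theorem, $M(A)$ admits a Kähler structure). $M(A)$ has a Spin-structure iff $w_2(M(A))=0$. *)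

(* Defs.v *)
From HB Require Import structures.
From mathcomp Require Import all_boot all_order all_algebra.
Set Implicit Arguments. Unset Strict Implicit. Unset Printing Implicit Defensive.
Import GRing.Theory.
Local Open Scope ring_scope.

Notation F2 := 'F_2.

(* Homogeneous polynomials of degree <= 2 in F_2[x_1,...,x_m].            *)
(* A linear form sum_i u_i x_i is a row vector u : 'rV[F2]_m.             *)
(* A quadratic form is represented by a matrix Q : 'M[F2]_m standing for  *)
(* the polynomial  sum_{i,j} Q i j * x_i * x_j  (variables commute).      *)
(* Two matrices represent the same polynomial iff their normal forms      *)
(* [coefficient of x_i x_j for i <= j] agree.                             *)
Definition qnorm m (Q : 'M[F2]_m) : 'M[F2]_m :=
  \matrix_(i, j) (if (i < j)%N then Q i j + Q j i
                  else if i == j then Q i i else 0).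

Definition qeq m (Q R : 'M[F2]_m) : Prop := qnorm Q = qnorm R.

Definition lmul m (u v : 'rV[F2]_m) : 'M[F2]_m := u^T *m v.

Definition xsq m (i : 'I_m) : 'M[F2]_m := delta_mx i i.

(* Truncation of F_2[x_1..x_m] to degree <= 2 (a quotient ring):          *)
(* elements (c, linear part, quadratic part) and truncated product.      *)
Definition trunc2 m := (F2 * 'rV[F2]_m * 'M[F2]_m)%type.
Definition tmul m (p q : trunc2 m) : trunc2 m :=
  let: (a, v, Q) := p in let: (b, w, R) := q in
  (a * b, a *: w + b *: v, a *: R + b *: Q + lmul v w).
Definition tone m : trunc2 m := (1, 0, 0).
Definition tprod m (s : seq (trunc2 m)) : trunc2 m := foldr (@tmul m) (tone m) s.
Definition tdeg2 m (p : trunc2 m) : 'M[F2]_m := p.2.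

Definition strictly_upper m (A : 'M[F2]_m) : Prop :=
  forall i j : 'I_m, (j <= i)%N -> A i j = 0.

Definition Pmat m (A : 'M[F2]_m) (i j : 'I_m) : nat :=
  if i == j then 1%N else if (i < j)%N && (A i j == 1) then 2%N else 0%N.

Definition alphaf (k : nat) : F2 :=
  match k with 1 => 1 | 2 => 1 | _ => 0 end.
Definition betaf (k : nat) : F2 :=
  match k with 1 => 1 | 3 => 1 | _ => 0 end.

Definition alpha_ m (A : 'M[F2]_m) (j : 'I_m) : 'rV[F2]_m :=
  \row_i alphaf (Pmat A i j).
Definition beta_ m (A : 'M[F2]_m) (j : 'I_m) : 'rV[F2]_m :=
  \row_i betaf (Pmat A i j).
Definition theta m (A : 'M[F2]_m) (j : 'I_m) : 'M[F2]_m :=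
  lmul (alpha_ A j) (beta_ A j).

(* Membership of a degree-2 homogeneous polynomial in Id_{P_A}:          *)
(* since Id_{P_A} is generated by the degree-2 forms theta_j, its         *)
(* degree-2 part is the F_2-span of theta_1..theta_m.                     *)
Definition in_IdP2 m (A : 'M[F2]_m) (Q : 'M[F2]_m) : Prop :=
  exists c : 'I_m -> F2, qeq Q (\sum_j c j *: theta A j).

(* Degree-2 part of prod_j (1 + alpha_j + beta_j) : the polynomial whose *)
(* image under pi^* is w_2(M(A)).                                         *)
Definition w2poly m (A : 'M[F2]_m) : 'M[F2]_m :=
  tdeg2 (tprod [seq ((1 : F2), alpha_ A j + beta_ A j, (0 : 'M[F2]_m)) | j <- enum 'I_m]).

(* "w_2(M(A)) = pi^*(f)" for a homogeneous degree-2 polynomial f:         *)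
(* pi^*(w2poly A) = pi^*(f) iff w2poly A - f lies in ker pi^* (degree 2), *)
(* which is Id_{P_A} in degree 2.                                         *)
Definition w2_represented_by m (A : 'M[F2]_m) (f : 'M[F2]_m) : Prop :=
  in_IdP2 A (w2poly A - f).

(* M(A) admits a Spin structure iff w_2(M(A)) = 0 = pi^*(0). *)
Definition has_spin m (A : 'M[F2]_m) : Prop := w2_represented_by A 0.

Definition bcoef m (A : 'M[F2]_m) (j i : 'I_m) : F2 :=
  if (i < j)%N then A i j else 0.

(* c_i = b_{j_1 i} + ... + b_{j_n i} for the partition given by jj,      *)
(* where j_k = jj (lshift n k), j_{k+n} = jj (rshift n k).                *)
Definition ccoef n (A : 'M[F2]_(n + n)) (jj : 'I_(n + n) -> 'I_(n + n))
  (i : 'I_(n + n)) : F2 :=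
  \sum_(k < n) bcoef A (jj (lshift n k)) i.

Definition w2_formula n (A : 'M[F2]_(n + n)) (jj : 'I_(n + n) -> 'I_(n + n))
  : 'M[F2]_(n + n) :=
  \sum_i ccoef A jj i *: xsq i.

(* Main.v *)
Set Warnings "-notation-overridden,-ambiguous-paths,-notation-incompatible-prefix".
Require Import Defs.
From HB Require Import structures.
From mathcomp Require Import all_boot all_order all_algebra.
From mathcomp Require Import zify ring.
Local Open Scope ring_scope.
Import GRing.Theory.
Set Implicit Arguments. Unset Strict Implicit.

Lemma F2_cases (y : 'F_2) : y = 0 \/ y = 1.
Proof. case: y => [[|[|k]]] Hk; [left|right|]; try by apply/val_inj. by []. Qed.
Lemma F2_nat (y : 'F_2) : y = (nat_of_ord y)%:R.
Proof. by case: (F2_cases y) => ->; apply/val_inj. Qed.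
Lemma F2_xx (y : 'F_2) : y + y = 0.
Proof. by case: (F2_cases y) => ->; apply/val_inj. Qed.
Lemma F2_lt2 (y : 'F_2) : (nat_of_ord y < 2)%N.
Proof. by case: y. Qed.
Lemma mx_xx m p (M : 'M['F_2]_(m,p)) : M + M = 0.
Proof. by apply/matrixP => i j; rewrite !mxE F2_xx. Qed.

Lemma tprod_lin m (T : Type) (f : T -> 'rV['F_2]_m) (s : seq T) :
  let p := tprod [seq ((1 : 'F_2), f x, (0:'M['F_2]_m)) | x <- s] in
  [/\ p.1.1 = 1, p.1.2 = \sum_(x <- s) f x,
      p.2 + p.2^T = (\sum_(x<-s) f x)^T *m (\sum_(x<-s) f x) + \sum_(x<-s) (f x)^T *m f x
    & forall i, p.2 i i = ('C(\sum_(x <- s) nat_of_ord (f x ord0 i), 2))%:R ].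
Proof.
elim: s => [|x s IH] /=.
  split => //; rewrite ?big_nil ?trmx0 ?mul0mx ?addr0 //.
  by move=> i; rewrite mxE big_nil.
move: IH; case: (tprod _) => [[c w] R] /= [-> -> HR Hd].
rewrite !big_cons !scale1r ?mul1r ?scaler0 ?addr0 /lmul; split => //.
- by rewrite addrC.
- apply/matrixP => a b; have HR' := congr1 (fun M : 'M['F_2]_m => M a b) HR.
  move: HR' => /=; rewrite !mxE !big_ord1 !mxE => HR'.
  rewrite -[R b a](addKr (R a b)) HR'.
  rewrite -[LHS]addr0 -(F2_xx (f x ord0 a * f x ord0 b)).
  move: (R a b) (f x ord0 a) (f x ord0 b) ((\sum_(j <- s) f j) ord0 a)
    ((\sum_(j <- s) f j) ord0 b) ((\sum_(j <- s) (f j)^T *m f j) a b).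
  move=> r1 u1 u2 s1 s2 d; ring.
- move=> i; rewrite !mxE Hd big_ord1 !mxE summxE.
  rewrite big_cons.
  have -> : \sum_(k <- s) f k ord0 i = (\sum_(k <- s) nat_of_ord (f k ord0 i))%:R.
    by rewrite natr_sum; apply: eq_bigr => k _; exact: F2_nat.
  rewrite [f x ord0 i]F2_nat -natrM -natrD; congr (_%:R).
  have := F2_lt2 (f x ord0 i).
  case: (nat_of_ord (f x ord0 i)) => [|[|//]] _.
    by rewrite mul0n addn0 add0n.
  by rewrite add1n binS bin1 mul1n.
Qed.

Lemma F2_if1 (y : 'F_2) : (if y == 1 then 1 else 0) = y.
Proof. by case: (F2_cases y) => ->. Qed.

Lemma theta_sum_entry m (A : 'M['F_2]_m) (c : 'I_m -> 'F_2) a b :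
  (\sum_j c j *: theta A j) a b = c b * alphaf (Pmat A a b).
Proof.
rewrite summxE (bigD1 b) //= big1 ?addr0.
  by rewrite !mxE big_ord1 !mxE /Pmat [b == b]eqxx mulr1.
move=> j jb; rewrite !mxE big_ord1 !mxE /Pmat.
have -> : (b == j) = false by apply/negbTE; rewrite eq_sym.
by rewrite [betaf _](_ : _ = 0) ?mulr0 //; case: ifP.
Qed.

Lemma alpha_diag m (A : 'M['F_2]_m) a : alphaf (Pmat A a a) = 1.
Proof. by rewrite /Pmat eqxx. Qed.

Lemma alpha_lt m (A : 'M['F_2]_m) (a b : 'I_m) : (a < b)%N -> alphaf (Pmat A a b) = A a b.
Proof.
move=> lt; rewrite /Pmat.
have -> : (a == b) = false by apply/negbTE; rewrite -val_eqE /= ltn_eqF.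
by rewrite lt /=; case: (F2_cases (A a b)) => ->.
Qed.

Lemma alpha_gt m (A : 'M['F_2]_m) (a b : 'I_m) : (b < a)%N -> alphaf (Pmat A a b) = 0.
Proof.
move=> lt; rewrite /Pmat.
have -> : (a == b) = false by apply/negbTE; rewrite -val_eqE /= gtn_eqF.
by rewrite ltnNge (ltnW lt).
Qed.

Lemma in_IdP2_diag m (A : 'M['F_2]_m) (Q : 'M['F_2]_m)
  (hQ : forall i j : 'I_m, (i < j)%N -> Q i j + Q j i = 0) :
  in_IdP2 A Q <-> (forall i j : 'I_m, (i < j)%N -> Q j j * A i j = 0).
Proof.
split.
- case=> c /matrixP H i j lt.
  have H1 := H i j; have H2 := H j j.
  move: H1 H2; rewrite !mxE lt ltnn eqxx !theta_sum_entry alpha_diag alpha_lt //.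
  by rewrite alpha_gt // hQ // mulr0 addr0 mulr1 => -> ->.
- move=> HH; exists (fun i => Q i i); apply/matrixP => i j; rewrite !mxE.
  have [lt|ge] := ltnP i j.
    by rewrite !theta_sum_entry alpha_lt // alpha_gt // mulr0 addr0 hQ // HH.
  case: eqP => // ->.
  by rewrite theta_sum_entry alpha_diag mulr1.
Qed.

Lemma diag_entry m (d : 'I_m -> 'F_2) (a b : 'I_m) :
  (\sum_i d i *: xsq i) a b = if a == b then d a else 0.
Proof.
rewrite summxE (bigD1 a) //= big1 ?addr0.
  rewrite !mxE eqxx /= eq_sym; case: eqP => _; [exact: mulr1 | exact: mulr0].
by move=> j ja; rewrite !mxE eq_sym (negbTE ja) mulr0.
Qed.

Lemma xsq_entry m (k a b : 'I_m) : xsq k a b = ((a == k) && (b == k))%:R.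
Proof. by rewrite mxE. Qed.

Lemma xsq_off m (k : 'I_m) : forall i j : 'I_m, (i < j)%N -> xsq k i j + xsq k j i = 0.
Proof.
move=> i j lt; rewrite !xsq_entry.
case: (eqVneq i k) => [ei|_]; case: (eqVneq j k) => [ej|_] /=; rewrite ?addr0 //.
by move: lt; rewrite ei ej ltnn.
Qed.

Lemma pair_big n (jj : 'I_(n + n) -> 'I_(n + n)) (hjj : injective jj)
  (R : Type) (idx : R) (op : Monoid.com_law idx) (F : 'I_(n + n) -> R) :
  \big[op/idx]_(j <- enum 'I_(n + n)) F j =
  \big[op/idx]_(k < n) op (F (jj (lshift n k))) (F (jj (rshift n k))).
Proof. by rewrite big_enum /= (reindex_inj hjj) /= big_split_ord big_split. Qed.

Lemma lin_form m (A : 'M['F_2]_m) (hA : strictly_upper A) j :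
  alpha_ A j + beta_ A j = \row_i A i j.
Proof.
apply/matrixP => z i; rewrite !mxE /Pmat.
case: (eqVneq i j) => [->|ne]; first by rewrite hA //; apply/val_inj.
have [lt|ge] := ltnP i j.
  by case: (F2_cases (A i j)) => ->; apply/val_inj.
by rewrite /= hA // addr0.
Qed.

Lemma bin_double M : ('C(M.*2, 2))%:R = (M%:R : 'F_2).
Proof.
have E : ('C(M.*2, 2) + M = (M * M).*2)%N.
  rewrite bin2 -doubleMl doubleK.
  case: M => [//|M]; rewrite doubleS /= -!mul2n; nia.
have H : ('C(M.*2, 2) + M)%N%:R = ((M * M)%N.*2)%:R :> 'F_2 by rewrite E.
move: H; rewrite (natrD _ ('C(M.*2,2)) M) => H.
apply: (addIr (M%:R)); rewrite H F2_xx -addnn (natrD _ (M * M)%N (M * M)%N).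
exact: F2_xx.
Qed.

Theorem theorem3p1 (n : nat) (A : 'M['F_2]_(n + n))
  (hA : strictly_upper A)
  (jj : 'I_(n + n) -> 'I_(n + n)) (hjj : injective jj)
  (hcol : forall k : 'I_n, col (jj (lshift n k)) A = col (jj (rshift n k)) A) :
  w2_represented_by A (w2_formula A jj) /\
  (has_spin A <->
     forall i : 'I_(n + n), ccoef A jj i = 0 \/ in_IdP2 A (xsq i)).
Proof.
have hcolE : forall i k, A i (jj (lshift n k)) = A i (jj (rshift n k)).
  move=> i k; have := congr1 (fun M : 'M['F_2]_(n + n, 1) => M i ord0) (hcol k).
  by rewrite /= !mxE.
pose f := fun j => alpha_ A j + beta_ A j.
have [_ _ HQ Hd] := tprod_lin f (enum 'I_(n + n)).
have Hsig : \sum_(j <- enum 'I_(n + n)) f j = 0.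
  apply/matrixP => z i; rewrite summxE mxE.
  under eq_bigr => j _ do rewrite /f lin_form // mxE.
  rewrite (pair_big hjj); apply: big1 => k _; rewrite hcolE; exact: F2_xx.
have HD : \sum_(j <- enum 'I_(n + n)) (f j)^T *m f j = 0.
  apply/matrixP => a b; rewrite summxE mxE.
  under eq_bigr => j _ do rewrite /f lin_form // !mxE big_ord1 !mxE.
  rewrite (pair_big hjj); apply: big1 => k _; rewrite !hcolE; exact: F2_xx.
have EQ : (tprod [seq (1, f x, 0) | x <- enum 'I_(n + n)]).2 = w2poly A by [].
rewrite EQ Hsig HD trmx0 mul0mx addr0 in HQ; rewrite EQ in Hd.
have Hoff : forall a b, w2poly A a b + w2poly A b a = 0.
  move=> a b; have := congr1 (fun M : 'M['F_2]_(n + n) => M a b) HQ.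
  by rewrite /= !mxE.
have Hdiag : forall i, w2poly A i i = ccoef A jj i.
  move=> i; rewrite Hd.
  have -> : (\sum_(x <- enum 'I_(n + n)) nat_of_ord (f x ord0 i)) =
      (\sum_(k < n) nat_of_ord (A i (jj (lshift n k)))).*2.
    rewrite (pair_big hjj _ (fun x => nat_of_ord (f x ord0 i))).
    rewrite -addnn -big_split; apply: eq_bigr => k _.
    by rewrite /f !lin_form // !mxE hcolE.
  rewrite bin_double /ccoef natr_sum; apply: eq_bigr => k _; rewrite /bcoef.
  case: ifP => lt; first exact/esym/F2_nat.
  by rewrite hA // leqNgt lt.
split.
- exists (fun _ => 0); apply/matrixP => a b; rewrite !mxE /w2_formula !theta_sum_entry.
  rewrite !diag_entry !mul0r ?addr0.
  have [lt|ge] := ltnP a b.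
    have ab : (a == b) = false by apply/negbTE; rewrite -val_eqE /= ltn_eqF.
    by rewrite ab eq_sym ab !subr0 Hoff.
  by case: eqP => _ //; rewrite eqxx Hdiag subrr.
- rewrite /has_spin /w2_represented_by subr0 in_IdP2_diag //; split.
  + move=> H i; case: (F2_cases (ccoef A jj i)) => c; [by left|right].
    apply/(in_IdP2_diag _ (xsq_off i)) => a b lt; rewrite !xsq_entry.
    case: eqP => [eb|] /=; last by rewrite mul0r.
    by subst b; have := H a i lt; rewrite Hdiag c mul1r => ->.
  + move=> G a b lt; rewrite Hdiag; case: (G b) => [->|]; first by rewrite mul0r.
    move/(in_IdP2_diag _ (xsq_off b)) => H; have := H a b lt.
    by rewrite xsq_entry eqxx mul1r => ->; rewrite mulr0.
Qed.
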